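(* The enhanced power graph of the abelian group $\mathbf C_{30}\times\mathbf C_{30}$ is not perfect; more precisely, if $a_1,a_2$ are elements of order $2$, $b_1,b_2$ elements of order $3$, and $c_1,c_2$ elements of order $5$ with $\langle a_1,a_2\rangle$, $\langle b_1,b_2\rangle$, $\langle c_1,c_2\rangle$ non-cyclic, then the vertices $a_1b_1,\ b_1c_2,\ a_2,\ b_2,\ a_1c_1$ induce a $5$-cycle in $\mathcal G_e(\mathbf C_{30}\times\mathbf C_{30})$.
   Context: $\mathbf C_{30}$ is the cyclic group of order $30$. The enhanced power graph $\mathcal G_e(\mathbf G)$ has vertex set $G$, distinct $x,y$ adjacent iff $\langle x,y\rangle$ is cyclic. A graph is perfect if every induced subgraph has chromatic number equal to its clique number. *)

(* Defs.v *)
From mathcomp Require Import all_boot all_fingroup all_solvable all_algebra.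
Set Implicit Arguments. Unset Strict Implicit. Unset Printing Implicit Defensive.

(* Simple graphs on a finite type T, given by an adjacency relation e
   (assumed symmetric and irreflexive in the uses below). *)
Section Graphs.
Variables (T : finType) (e : rel T).

Definition is_clique (K : {set T}) : bool :=
  [forall x in K, forall y in K, (x != y) ==> e x y].

Definition clique_number (S : {set T}) : nat :=
  \max_(K : {set T} | (K \subset S) && is_clique K) #|K|.

Definition colorable (S : {set T}) (k : nat) : bool :=
  [exists f : {ffun T -> 'I_k},
     [forall x in S, forall y in S, e x y ==> (f x != f y)]].

(* chromatic number of the induced subgraph on S: least k <= #|S| such that
   S is k-colourable (#|S| colours always suffice). *)
Definition chromatic_number (S : {set T}) : nat :=
  \big[minn/#|S|]_(k < #|S|.+1 | colorable S k) k.

Definition perfect : Prop :=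
  forall S : {set T}, chromatic_number S = clique_number S.

Definition induces_C5 (v0 v1 v2 v3 v4 : T) : bool :=
  [&& uniq [:: v0; v1; v2; v3; v4],
      e v0 v1, e v1 v2, e v2 v3, e v3 v4, e v4 v0,
      ~~ e v0 v2, ~~ e v0 v3, ~~ e v1 v3, ~~ e v1 v4 & ~~ e v2 v4].

End Graphs.

Definition ep_adj (gT : finGroupType) : rel gT :=
  fun x y => (x != y) && cyclic <<[set x; y]>>%g.

(* C_30 x C_30, with 'Z_30 viewed as an (additive) finite group. *)
Definition C30xC30 : finGroupType := ('Z_30 * 'Z_30)%type.

(* Main.v *)
Require Import Defs.
From mathcomp Require Import all_boot all_fingroup all_solvable all_algebra.
From mathcomp Require Import zify.
Set Implicit Arguments. Unset Strict Implicit.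

Section Gen.
Variables (T : finType) (e : rel T).

Lemma C5_not_perfect v0 v1 v2 v3 v4 :
  induces_C5 e v0 v1 v2 v3 v4 -> ~ perfect e.
Proof.
case/andP=> u /andP[e01 /andP[e12 /andP[e23 /andP[e34 /andP[e40 /andP[n02 /andP[n03 /andP[n13 /andP[n14 n24]]]]]]]]].
set s := [:: v0; v1; v2; v3; v4].
set S := [set x in s].
have cS : #|S| = 5 by rewrite cardsE; apply/card_uniqP.
have d02 : v0 != v2 by apply: contraTneq u => ->; rewrite /= !inE eqxx ?orbT.
have d03 : v0 != v3 by apply: contraTneq u => ->; rewrite /= !inE eqxx ?orbT.
have d13 : v1 != v3 by apply: contraTneq u => ->; rewrite /= !inE eqxx ?orbT ?andbF.
have d14 : v1 != v4 by apply: contraTneq u => ->; rewrite /= !inE eqxx ?orbT ?andbF.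
have d24 : v2 != v4 by apply: contraTneq u => ->; rewrite /= !inE eqxx ?orbT ?andbF.
have inS : forall x, x \in s -> x \in S by move=> x hx; rewrite inE hx.
have chi : 3 <= chromatic_number e S.
  rewrite /chromatic_number; apply: (big_ind (fun n => 3 <= n)).
  - by rewrite cS.
  - by move=> x y hx hy; rewrite leq_min hx hy.
  move=> k /existsP [f /forallP H].
  have hc : forall x y, x \in s -> y \in s -> e x y -> f x != f y.
    move=> x y hx hy hxy; have := H x; rewrite inS //= => /forallP/(_ y).
    by rewrite inS //= hxy.
  have i := fun x => @ltn_ord k (f x).
  rewrite leqNgt; apply/negP => hk.
  have f01 : f v0 != f v1 by apply: hc; rewrite ?inE ?eqxx ?orbT.
  have f12 : f v1 != f v2 by apply: hc; rewrite ?inE ?eqxx ?orbT.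
  have f23 : f v2 != f v3 by apply: hc; rewrite ?inE ?eqxx ?orbT.
  have f34 : f v3 != f v4 by apply: hc; rewrite ?inE ?eqxx ?orbT.
  have f40 : f v4 != f v0 by apply: hc; rewrite ?inE ?eqxx ?orbT.
  rewrite -!val_eqE /= in f01 f12 f23 f34 f40.
  have key : forall a b c d g K : nat, K < 3 -> a < K -> b < K -> c < K ->
     d < K -> g < K -> a != b -> b != c -> c != d -> d != g -> g != a -> False.
    move=> a b c d g K hK.
    have l2 : forall x, x < K -> x < 2 by move=> x hx; apply: leq_trans hx _.
    move=> /l2 ha /l2 hb /l2 hc' /l2 hd /l2 hg.
    by case: a ha => [|[|]] // _; case: b hb => [|[|]] // _;
       case: c hc' => [|[|]] // _; case: d hd => [|[|]] // _;
       case: g hg => [|[|]] // _.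
  exact: (key _ _ _ _ _ _ hk (i v0) (i v1) (i v2) (i v3) (i v4) f01 f12 f23 f34 f40).
have om : clique_number e S <= 2.
  rewrite /clique_number; apply: (big_ind (fun n => n <= 2)) => //.
    by move=> x y hx hy; rewrite geq_max hx hy.
  move=> K /andP [KS /forallP H].
  have hk : forall x y, x \in K -> y \in K -> x != y -> e x y.
    move=> x y hx hy hxy; have := H x; rewrite hx /= => /forallP/(_ y).
    by rewrite hy /= hxy.
  have hle : #|K| <= size [seq x <- s | x \in K].
    apply: leq_trans (card_size _); apply: subset_leq_card.
    apply/subsetP => x hx; rewrite mem_filter hx /=.
    by have := subsetP KS x hx; rewrite inE.
  apply: leq_trans hle _.
  have c02 : ~~ ((v0 \in K) && (v2 \in K)).
    by apply/negP => /andP [a b]; move: (hk _ _ a b d02); rewrite (negbTE n02).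
  have c03 : ~~ ((v0 \in K) && (v3 \in K)).
    by apply/negP => /andP [a b]; move: (hk _ _ a b d03); rewrite (negbTE n03).
  have c13 : ~~ ((v1 \in K) && (v3 \in K)).
    by apply/negP => /andP [a b]; move: (hk _ _ a b d13); rewrite (negbTE n13).
  have c14 : ~~ ((v1 \in K) && (v4 \in K)).
    by apply/negP => /andP [a b]; move: (hk _ _ a b d14); rewrite (negbTE n14).
  have c24 : ~~ ((v2 \in K) && (v4 \in K)).
    by apply/negP => /andP [a b]; move: (hk _ _ a b d24); rewrite (negbTE n24).
  move: c02 c03 c13 c14 c24; rewrite /s /=.
  by case: (v0 \in K); case: (v1 \in K); case: (v2 \in K); case: (v3 \in K);
     case: (v4 \in K).
move=> hp; have E := hp S; move: chi om; rewrite E => h1 h2.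
by have := leq_trans h1 h2.
Qed.
End Gen.

Section Grp.
Local Open Scope group_scope.
Implicit Types x y u v g : C30xC30.

Lemma comm x y : commute x y.
Proof. case: x => x1 x2; case: y => y1 y2; rewrite /commute. congr (_,_); apply: Zp_mulgC. Qed.

Lemma ex x n k r : #[x] = n -> k %% n = r -> x ^+ k = x ^+ r.
Proof. by move=> <- <-; rewrite expg_mod_order. Qed.

Lemma ne1 x n : #[x] = n -> (n != 1)%N -> x != 1.
Proof. by move=> <-; apply: contraNneq => ->; rewrite order1. Qed.

Lemma neqX x y k : x ^+ k != y ^+ k -> x != y.
Proof. by apply: contraNneq => ->. Qed.

Lemma cyc_sub x y g : x \in <[g]> -> y \in <[g]> -> cyclic <<[set x; y]>>.
Proof.
move=> hx hy; apply: cyclicS (cycle_cyclic g).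
by rewrite gen_subG subUset !sub1set hx hy.
Qed.

Lemma noncyc_sup x y u v : u \in <<[set x; y]>> -> v \in <<[set x; y]>> ->
  ~~ cyclic <<[set u; v]>> -> ~~ cyclic <<[set x; y]>>.
Proof.
move=> hu hv; apply: contra => c; apply: cyclicS c.
by rewrite gen_subG subUset !sub1set hu hv.
Qed.

Lemma noncyc_neq x y : ~~ cyclic <<[set x; y]>> -> x != y.
Proof. by apply: contraNneq => ->; rewrite setUid; apply: cycle_cyclic. Qed.

Lemma mx x y : x \in <<[set x; y]>>.
Proof. by rewrite mem_gen // !inE eqxx. Qed.
Lemma my x y : y \in <<[set x; y]>>.
Proof. by rewrite mem_gen // !inE eqxx orbT. Qed.

Lemma mX x y k z : z = x ^+ k -> z \in <<[set x; y]>>.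
Proof. by move=> ->; rewrite groupX // mx. Qed.
Lemma mY x y k z : z = y ^+ k -> z \in <<[set x; y]>>.
Proof. by move=> ->; rewrite groupX // my. Qed.

Lemma mC g k z : z = g ^+ k -> z \in <[g]>.
Proof. by move=> ->; rewrite mem_cycle. Qed.

Lemma nonedge x y u v : u \in <<[set x; y]>> -> v \in <<[set x; y]>> ->
  ~~ cyclic <<[set u; v]>> -> ~~ cyclic <<[set x; y]>>.
Proof. exact: noncyc_sup. Qed.
Lemma nonedgeE x y : ~~ cyclic <<[set x; y]>> -> ~~ ep_adj x y.
Proof. by move=> hc; rewrite /ep_adj negb_and hc orbT. Qed.

Lemma setC2 x y : <<[set x; y]>> = <<[set y; x]>>.
Proof. by rewrite setUC. Qed.

Ltac sim := rewrite ?(expgMn _ (comm _ _)).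

Lemma part2 a1 a2 b1 b2 c1 c2 :
    #[a1] = 2 -> #[a2] = 2 -> #[b1] = 3 -> #[b2] = 3 ->
    #[c1] = 5 -> #[c2] = 5 ->
    ~~ cyclic <<[set a1; a2]>> -> ~~ cyclic <<[set b1; b2]>> ->
    ~~ cyclic <<[set c1; c2]>> ->
    induces_C5 (@ep_adj C30xC30)
      (a1 * b1) (b1 * c2) a2 b2 (a1 * c1).
Proof.
move=> A1 A2 B1 B2 C1 C2 nA nB nC.
have nA' : ~~ cyclic <<[set a2; a1]>> by rewrite setC2.
have nC' : ~~ cyclic <<[set c2; c1]>> by rewrite setC2.
have n02 : ~~ cyclic <<[set a1 * b1; a2]>>.
  apply: (nonedge _ (my _ _) nA); apply: (@mX _ _ 3); sim.
  by rewrite (@ex _ _ 3 1 A1) // (@ex _ _ 3 0 B1) // expg1 expg0 mulg1.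
have n03 : ~~ cyclic <<[set a1 * b1; b2]>>.
  apply: (nonedge _ (my _ _) nB); apply: (@mX _ _ 4); sim.
  by rewrite (@ex _ _ 4 0 A1) // (@ex _ _ 4 1 B1) // expg1 expg0 mul1g.
have n13 : ~~ cyclic <<[set b1 * c2; b2]>>.
  apply: (nonedge _ (my _ _) nB); apply: (@mX _ _ 10); sim.
  by rewrite (@ex _ _ 10 1 B1) // (@ex _ _ 10 0 C2) // expg1 expg0 mulg1.
have n14 : ~~ cyclic <<[set b1 * c2; a1 * c1]>>.
  apply: (nonedge _ _ nC').
    apply: (@mX _ _ 6); sim.
    by rewrite (@ex _ _ 6 0 B1) // (@ex _ _ 6 1 C2) // expg1 expg0 mul1g.
  apply: (@mY _ _ 6); sim.
  by rewrite (@ex _ _ 6 0 A1) // (@ex _ _ 6 1 C1) // expg1 expg0 mul1g.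
have n24 : ~~ cyclic <<[set a2; a1 * c1]>>.
  apply: (nonedge (mx _ _) _ nA').
  apply: (@mY _ _ 5); sim.
  by rewrite (@ex _ _ 5 1 A1) // (@ex _ _ 5 0 C1) // expg1 expg0 mulg1.
have d01 : a1 * b1 != b1 * c2.
  apply: (@neqX _ _ 15); sim.
  rewrite (@ex _ _ 15 1 A1) // (@ex _ _ 15 0 B1) // (@ex _ _ 15 0 C2) // !expg1 !expg0 !mulg1.
  exact: ne1 A1 _.
have d12 : b1 * c2 != a2.
  apply: (@neqX _ _ 15); sim.
  rewrite (@ex _ _ 15 1 A2) // (@ex _ _ 15 0 B1) // (@ex _ _ 15 0 C2) // !expg1 !expg0 !mulg1.
  by rewrite eq_sym; exact: ne1 A2 _.
have d23 : a2 != b2.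
  apply: (@neqX _ _ 3).
  rewrite (@ex _ _ 3 1 A2) // (@ex _ _ 3 0 B2) // !expg1 !expg0.
  exact: ne1 A2 _.
have d34 : b2 != a1 * c1.
  apply: (@neqX _ _ 10); sim.
  rewrite (@ex _ _ 10 0 A1) // (@ex _ _ 10 1 B2) // (@ex _ _ 10 0 C1) // !expg1 !expg0 !mulg1.
  exact: ne1 B2 _.
have d40 : a1 * c1 != a1 * b1.
  apply: (@neqX _ _ 10); sim.
  rewrite (@ex _ _ 10 0 A1) // (@ex _ _ 10 1 B1) // (@ex _ _ 10 0 C1) // !expg1 !expg0 !mul1g.
  by rewrite eq_sym; exact: ne1 B1 _.
have e01 : ep_adj (a1 * b1) (b1 * c2).
  rewrite /ep_adj d01 /=; apply: (@cyc_sub _ _ (a1 * b1 * c2)).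
    apply: (@mC _ 25); sim.
    by rewrite (@ex _ _ 25 1 A1) // (@ex _ _ 25 1 B1) // (@ex _ _ 25 0 C2) // !expg1 expg0 mulg1.
  apply: (@mC _ 16); sim.
  by rewrite (@ex _ _ 16 0 A1) // (@ex _ _ 16 1 B1) // (@ex _ _ 16 1 C2) // !expg1 expg0 mul1g.
have e12 : ep_adj (b1 * c2) a2.
  rewrite /ep_adj d12 /=; apply: (@cyc_sub _ _ (a2 * b1 * c2)).
    apply: (@mC _ 16); sim.
    by rewrite (@ex _ _ 16 0 A2) // (@ex _ _ 16 1 B1) // (@ex _ _ 16 1 C2) // !expg1 expg0 mul1g.
  apply: (@mC _ 15); sim.
  by rewrite (@ex _ _ 15 1 A2) // (@ex _ _ 15 0 B1) // (@ex _ _ 15 0 C2) // !expg1 !expg0 !mulg1.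
have e23 : ep_adj a2 b2.
  rewrite /ep_adj d23 /=; apply: (@cyc_sub _ _ (a2 * b2)).
    apply: (@mC _ 3); sim.
    by rewrite (@ex _ _ 3 1 A2) // (@ex _ _ 3 0 B2) // !expg1 expg0 mulg1.
  apply: (@mC _ 4); sim.
  by rewrite (@ex _ _ 4 0 A2) // (@ex _ _ 4 1 B2) // !expg1 expg0 mul1g.
have e34 : ep_adj b2 (a1 * c1).
  rewrite /ep_adj d34 /=; apply: (@cyc_sub _ _ (a1 * b2 * c1)).
    apply: (@mC _ 10); sim.
    by rewrite (@ex _ _ 10 0 A1) // (@ex _ _ 10 1 B2) // (@ex _ _ 10 0 C1) // !expg1 !expg0 mul1g mulg1.
  apply: (@mC _ 21); sim.
  by rewrite (@ex _ _ 21 1 A1) // (@ex _ _ 21 0 B2) // (@ex _ _ 21 1 C1) // !expg1 !expg0 mulg1.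
have e40 : ep_adj (a1 * c1) (a1 * b1).
  rewrite /ep_adj d40 /=; apply: (@cyc_sub _ _ (a1 * b1 * c1)).
    apply: (@mC _ 21); sim.
    by rewrite (@ex _ _ 21 1 A1) // (@ex _ _ 21 0 B1) // (@ex _ _ 21 1 C1) // !expg1 !expg0 mulg1.
  apply: (@mC _ 25); sim.
  by rewrite (@ex _ _ 25 1 A1) // (@ex _ _ 25 1 B1) // (@ex _ _ 25 0 C1) // !expg1 !expg0 mulg1.
have d02 := noncyc_neq n02. have d03 := noncyc_neq n03.
have d13 := noncyc_neq n13. have d14 := noncyc_neq n14.
have d24 := noncyc_neq n24.
have d04 : a1 * b1 != a1 * c1 by rewrite eq_sym.
rewrite /induces_C5 e01 e12 e23 e34 e40 !nonedgeE // !andbT /= !inE !negb_or.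
by rewrite d01 d02 d03 d04 d12 d13 d14 d23 d24 d34.
Qed.

Lemma ordp x p : prime p -> x ^+ p == 1 -> x != 1 -> #[x] = p.
Proof.
move=> pp hx h1; have d : (#[x] %| p)%N by rewrite order_dvdn.
have [_ H] := primeP pp; case/orP: (H _ d) => /eqP // o1.
by move: h1; rewrite -order_eq1 o1.
Qed.

Lemma noncycP x y p : prime p -> #[x] = p -> #[y] = p ->
  (forall i, (i < p)%N -> y != x ^+ i) -> ~~ cyclic <<[set x; y]>>.
Proof.
move=> pp ox oy H; apply/negP => cG.
have sx : <[x]> \subset <<[set x; y]>> by rewrite cycle_subG mx.
have sy : <[y]> \subset <<[set x; y]>> by rewrite cycle_subG my.
have c : #[x] == #[y] by rewrite ox oy.
rewrite -(eq_subG_cyclic cG sx sy) in c.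
have E : <[x]> = <[y]> := eqP c.
have : y \in <[x]> by rewrite E cycle_id.
case/cycleP => i hi.
rewrite -expg_mod_order in hi.
suff lt : (i %% #[x] < p)%N by have := H _ lt; rewrite hi eqxx.
by rewrite ox ltn_pmod // prime_gt0.
Qed.

Definition A1 : C30xC30 := (inZp 15, inZp 0).
Definition A2 : C30xC30 := (inZp 0, inZp 15).
Definition B1 : C30xC30 := (inZp 10, inZp 0).
Definition B2 : C30xC30 := (inZp 0, inZp 10).
Definition C1 : C30xC30 := (inZp 6, inZp 0).
Definition C2 : C30xC30 := (inZp 0, inZp 6).

Lemma part1 : ~ perfect (@ep_adj C30xC30).
Proof.
apply: (@C5_not_perfect _ _ _ _ _ _ _ (@part2 A1 A2 B1 B2 C1 C2 _ _ _ _ _ _ _ _ _)).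
- by apply: ordp.
- by apply: ordp.
- by apply: ordp.
- by apply: ordp.
- by apply: ordp.
- by apply: ordp.
- apply: (@noncycP _ _ 2) => //; try apply: ordp => //.
  by case=> [|[|]].
- apply: (@noncycP _ _ 3) => //; try apply: ordp => //.
  by case=> [|[|[|]]].
- apply: (@noncycP _ _ 5) => //; try apply: ordp => //.
  by case=> [|[|[|[|[|]]]]].
Qed.

End Grp.

Theorem mainTheorem7 :
  ~ perfect (@ep_adj C30xC30) /\
  forall a1 a2 b1 b2 c1 c2 : C30xC30,
    #[a1]%g = 2 -> #[a2]%g = 2 -> #[b1]%g = 3 -> #[b2]%g = 3 ->
    #[c1]%g = 5 -> #[c2]%g = 5 ->
    ~~ cyclic <<[set a1; a2]>>%g -> ~~ cyclic <<[set b1; b2]>>%g ->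
    ~~ cyclic <<[set c1; c2]>>%g ->
    induces_C5 (@ep_adj C30xC30)
      (a1 * b1)%g (b1 * c2)%g a2 b2 (a1 * c1)%g.
Proof. split; [exact: part1 | exact: part2]. Qed.
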